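(* Let $\varphi$ be a quantifier-free Presburger formula with exactly one free variable. Then $|\varphi|_{\mathsf{p}}\le 2^{|\varphi|}$.
   Context: Quantifier-free Presburger formulas are Boolean combinations of atoms $\sum a_ix_i\le b$ and $\sum a_ix_i\equiv b\pmod c$, integer constants written in binary; $|\varphi|$ is the number of symbols needed to write $\varphi$ (constants in binary). A set $S\subseteq\mathbb{Z}$ is ultimately periodic if there are $n_0,p\in\mathbb{N}$, $p\ge1$, such that for all $n\in\mathbb{Z}$ with $|n|\ge n_0$, $n+p\in S$ iff $n\in S$; such $p$ is a period of $S$. Every Presburger formula with one free variable defines an ultimately periodic set, and $|\varphi|_{\mathsf{p}}$ denotes the smallest period of the set defined by $\varphi$. *)

(* Defs.v *)
From mathcomp Require Import all_boot all_order all_algebra.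
Set Implicit Arguments. Unset Strict Implicit. Unset Printing Implicit Defensive.
Import Order.TTheory GRing.Theory Num.Theory.
Local Open Scope ring_scope.

(* Linear terms  sum_i a_i * x_{v_i}, as a list of (coefficient, variable index). *)
Definition term := seq (int * nat).

Inductive qf_formula : Type :=
| FLe   : term -> int -> qf_formula
| FCong : term -> int -> int -> qf_formula
| FNeg  : qf_formula -> qf_formula
| FAnd  : qf_formula -> qf_formula -> qf_formula
| FOr   : qf_formula -> qf_formula -> qf_formula.

Definition eval_term (env : nat -> int) (t : term) : int :=
  \sum_(av <- t) av.1 * env av.2.

Fixpoint holds (env : nat -> int) (f : qf_formula) : bool :=
  match f with
  | FLe t b => eval_term env t <= b
  | FCong t b c => (eval_term env t == b %[mod c])%Z
  | FNeg g => ~~ holds env g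
  | FAnd g h => holds env g && holds env h
  | FOr g h => holds env g || holds env h
  end.

Definition term_vars (t : term) : seq nat := map snd t.
Fixpoint fvars (f : qf_formula) : seq nat :=
  match f with
  | FLe t _ => term_vars t
  | FCong t _ _ => term_vars t
  | FNeg g => fvars g
  | FAnd g h | FOr g h => fvars g ++ fvars h
  end.

Definition one_free_var (f : qf_formula) (v : nat) : Prop :=
  fvars f != [::] /\ all (fun w => w == v) (fvars f).

(* Size, with integer constants written in binary. *)
Definition bitlen (n : nat) : nat := (trunc_log 2 n).+1.   (* binary digits of n; 0 -> 1 *)
Definition csize (k : int) : nat := (((k < 0)%R : nat) + bitlen (absz k))%N.
(* a_1 x_1 + ... + a_k x_k : each a_i (binary) and x_i, plus k-1 '+' symbols *)
Definition term_size (t : term) : nat :=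
  (\sum_(av <- t) (csize av.1 + 1) + (size t).-1)%N.
Fixpoint fsize (f : qf_formula) : nat :=
  (match f with
  | FLe t b => term_size t + 1 + csize b
  | FCong t b c => term_size t + 1 + csize b + 1 + csize c
  | FNeg g => (fsize g).+1
  | FAnd g h | FOr g h => (fsize g + fsize h).+1
  end)%N.

Definition defined_set (f : qf_formula) (v : nat) : int -> bool :=
  fun n => holds (fun _ => n) f.

Definition is_period (S : int -> bool) (p : nat) : Prop :=
  (1 <= p)%N /\ exists n0 : nat, forall n : int,
    (n0 <= absz n)%N -> S (n + p%:Z) = S n.

Definition is_smallest_period (S : int -> bool) (p : nat) : Prop :=
  is_period S p /\ forall q, is_period S q -> (p <= q)%N.

(* Main.v *)
Require Import Defs.
From mathcomp Require Import all_boot all_order all_algebra.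
From mathcomp Require Import zify ring.
From Stdlib Require Import Classical.
Import Order.TTheory GRing.Theory Num.Theory.

Local Open Scope ring_scope.

Definition SP (S : int -> bool) (p : nat) : Prop :=
  exists N : nat, forall n m : int, (p %| absz (n - m))%N ->
    ((N%:Z <= n) && (N%:Z <= m)) || ((n <= - N%:Z) && (m <= - N%:Z)) ->
    S n = S m.

Lemma SP_mul S p k : SP S p -> SP S (p * k)%N.
Proof.
move=> [N HN]; exists N => n m Hd Hr; apply: HN Hr.
by apply: dvdn_trans Hd; apply: dvdn_mulr.
Qed.

Lemma SP_N (S : int -> bool) p N N' : (N <= N')%N ->
  (forall n m : int, (p %| absz (n - m))%N ->
    ((N%:Z <= n) && (N%:Z <= m)) || ((n <= - N%:Z) && (m <= - N%:Z)) ->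
    S n = S m) ->
  (forall n m : int, (p %| absz (n - m))%N ->
    ((N'%:Z <= n) && (N'%:Z <= m)) || ((n <= - N'%:Z) && (m <= - N'%:Z)) ->
    S n = S m).
Proof.
move=> le HN n m Hd Hr; apply: HN Hd _.
case/orP: Hr => /andP [h1 h2]; apply/orP; [left|right]; apply/andP; split; lia.
Qed.

Lemma eval_const (n : int) t :
  eval_term (fun _ => n) t = (\sum_(av <- t) av.1) * n.
Proof. by rewrite /eval_term big_distrl. Qed.

Lemma atom_const (A b : int) (N : nat) (n m : int) :
  `|b| < N%:Z ->
  ((N%:Z <= n) && (N%:Z <= m)) || ((n <= - N%:Z) && (m <= - N%:Z)) -> A != 0 ->
  [/\ (A * n == b) = false, (A * m == b) = false & (A * n <= b) = (A * m <= b)].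
Proof.
move=> hb hn hA.
have hA' : (0 < A) || (A < 0) by move: hA; lia.
case/orP: hA' => hA'; case/orP: hn => /andP [hn hm].
- have h : 0 <= (A - 1) * n by apply: mulr_ge0; lia.
  have h' : 0 <= (A - 1) * m by apply: mulr_ge0; lia.
  rewrite ?mulrN ?mulNr ?mulrBl ?mulNr ?mul1r in h h'; split; lia.
- have h : 0 <= (A - 1) * (- n) by apply: mulr_ge0; lia.
  have h' : 0 <= (A - 1) * (- m) by apply: mulr_ge0; lia.
  rewrite ?mulrN ?mulNr ?mulrBl ?mulNr ?mul1r in h h'; split; lia.
- have h : 0 <= (- A - 1) * n by apply: mulr_ge0; lia.
  have h' : 0 <= (- A - 1) * m by apply: mulr_ge0; lia.
  rewrite ?mulrN ?mulNr ?mulrBl ?mulNr ?mul1r in h h'; split; lia.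
- have h : 0 <= (- A - 1) * (- n) by apply: mulr_ge0; lia.
  have h' : 0 <= (- A - 1) * (- m) by apply: mulr_ge0; lia.
  rewrite ?mulrN ?mulNr ?mulrBl ?mulNr ?mul1r in h h'; split; lia.
Qed.

Fixpoint per (f : qf_formula) : nat :=
  match f with
  | FLe _ _ => 1%N
  | FCong _ _ c => if c == 0 then 1%N else absz c
  | FNeg g => per g
  | FAnd g h | FOr g h => (per g * per h)%N
  end.

Lemma per_SP f : SP (fun n => holds (fun _ => n) f) (per f).
Proof.
elim: f => [t b|t b c|g IH|g IHg h IHh|g IHg h IHh] /=.
- exists (absz b).+1 => n m _ Hr; rewrite !eval_const.
  set A := \sum_(av <- t) av.1.
  have [->|hA] := eqVneq A 0; first by rewrite !mul0r.
  have hb : `|b| < ((absz b).+1)%:Z by lia.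
  by case: (@atom_const A b _ n m hb Hr hA).
- exists (absz b).+1 => n m Hd Hr; rewrite !eval_const !eqz_mod_dvd.
  set A := \sum_(av <- t) av.1.
  have [->|hc] := eqVneq c 0.
  + rewrite !dvd0z !subr_eq0.
    have [->|hA] := eqVneq A 0; first by rewrite !mul0r.
    have hb : `|b| < ((absz b).+1)%:Z by lia.
    by case: (@atom_const A b _ n m hb Hr hA) => -> ->.
  + move: Hd; rewrite (negbTE hc) => Hd.
    have Hd' : (c %| A * (n - m))%Z by apply: dvdz_mull.
    have -> : A * n - b = (A * m - b) + A * (n - m) by ring.
    by rewrite rpredDr.
- case: IH => N HN; exists N => n m Hd Hr; by rewrite (HN n m Hd Hr).
- have [N1 H1] := @SP_mul _ _ (per h) IHg.
  have [N2 H2] := @SP_mul _ _ (per g) IHh.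
  exists (maxn N1 N2) => n m Hd Hr.
  rewrite (@SP_N _ _ _ _ (leq_maxl N1 N2) H1 n m Hd Hr) (@SP_N _ _ _ _ (leq_maxr N1 N2) H2 n m _ Hr) //.
  by rewrite mulnC.
- have [N1 H1] := @SP_mul _ _ (per h) IHg.
  have [N2 H2] := @SP_mul _ _ (per g) IHh.
  exists (maxn N1 N2) => n m Hd Hr.
  rewrite (@SP_N _ _ _ _ (leq_maxl N1 N2) H1 n m Hd Hr) (@SP_N _ _ _ _ (leq_maxr N1 N2) H2 n m _ Hr) //.
  by rewrite mulnC.
Qed.

Lemma per_gt0 f : (0 < per f)%N.
Proof.
elim: f => //= [t b c|g Hg h Hh|g Hg h Hh]; try by rewrite muln_gt0 Hg Hh.
by case: eqP => // /eqP; rewrite absz_gt0.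
Qed.

Lemma pow_mono m n : (m <= n)%N -> (2 ^ m <= 2 ^ n)%N.
Proof. by move=> h; rewrite leq_exp2l. Qed.

Lemma per_bound f : (per f <= 2 ^ fsize f)%N.
Proof.
elim: f => [t b|t b c|g IH|g IHg h IHh|g IHg h IHh] /=.
- by rewrite expn_gt0.
- case: eqP => _; first by rewrite expn_gt0.
  apply: leq_trans (ltnW (trunc_log_ltn (absz c) (isT : 1 < 2)%N)) _.
  apply: pow_mono; rewrite /csize /bitlen; lia.
- by apply: leq_trans IH _; apply: pow_mono.
- apply: leq_trans (leq_mul IHg IHh) _; rewrite -expnD; apply: pow_mono; lia.
- apply: leq_trans (leq_mul IHg IHh) _; rewrite -expnD; apply: pow_mono; lia.
Qed.

Lemma SP_period S p : (0 < p)%N -> SP S p -> is_period S p.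
Proof.
move=> hp [N HN]; split => //; exists (N + p)%N => n hn.
apply: HN; first by have -> : (n + p%:Z - n) = p%:Z by ring.
lia.
Qed.

Lemma min_ex (P : nat -> Prop) k : P k ->
  exists p, P p /\ (forall q, P q -> (p <= q)%N) /\ (p <= k)%N.
Proof.
elim/ltn_ind: k => k IH Pk.
case: (classic (exists q, (q < k)%N /\ P q)) => [[q [hq Pq]]|hno].
- have [p [Pp [hmin hpq]]] := IH q hq Pq.
  by exists p; split => //; split => //; apply: leq_trans hpq (ltnW hq).
- exists k; split => //; split => // q Pq.
  by rewrite leqNgt; apply/negP => hq; apply: hno; exists q.
Qed.

Theorem lemma6p1 (f : qf_formula) (v : nat) :
  one_free_var f v ->
  exists p : nat, is_smallest_period (defined_set f v) p /\ (p <= 2 ^ fsize f)%N.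
Proof.
move=> _.
have Hp : is_period (defined_set f v) (per f).
  exact: SP_period (per_gt0 f) (per_SP f).
have [p [Pp [hmin hle]]] := @min_ex (is_period (defined_set f v)) _ Hp.
exists p; split; first by split.
exact: leq_trans hle (per_bound f).
Qed.
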